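(* Let $\mathbb{K}$ be a field and let $\mathcal F=\{f_n(q)\}_{n=1}^\infty$ be a nonzero solution (i.e. $f_n\neq 0$ for some $n$) of the functional equation $f_{mn}(q)=f_m(q)f_n(q^m)$ for all $m,n\in\mathbb N$, with $f_n(q)\in\mathbb{K}[q]$. Then: (i) $f_1(q)=1$; (ii) $f_m(q)f_n(q^m)=f_n(q)f_m(q^n)$ for all $m,n\in\mathbb N$; (iii) writing each $f_n$ with $n\in\mathrm{supp}(\mathcal F)$ uniquely as $f_n(q)=a(n)q^{v(f_n)}g_n(q)$ with $a(n)\in\mathbb{K}\setminus\{0\}$, $v(f_n)\in\mathbb N_0$ and $g_n(q)\in\mathbb{K}[q]$ with $g_n(0)=1$, and setting $a(n)=0$, $g_n(q)=0$ for $n\notin\mathrm{supp}(\mathcal F)$, one has $a(mn)=a(m)a(n)$ for all $m,n\in\mathrm{supp}(\mathcal F)$; there is a nonnegative rational number $t$ with $v(f_n)=t(n-1)$ for all $n\in\mathrm{supp}(\mathcal F)$; and $\mathcal G=\{g_n(q)\}_{n=1}^\infty$ is again a solution of the same functional equation with $\mathrm{supp}(\mathcal G)=\mathrm{supp}(\mathcal F)$; (iv) there is a nonnegative rational number $s$ with $\deg(f_n)=s(n-1)$ for all $n\in\mathrm{supp}(\mathcal F)$.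
   Context: $\mathbb N=\{1,2,3,\dots\}$, $\mathbb N_0=\mathbb N\cup\{0\}$. $\mathrm{supp}(\mathcal F)=\{n\in\mathbb N: f_n(q)\ne0\}$. For a nonzero polynomial $f$, $v(f)$ is the smallest exponent of $q$ occurring in $f$ with nonzero coefficient. *)

(* Defs.v *)
From HB Require Import structures.
From mathcomp Require Import all_boot all_order all_algebra.
Set Implicit Arguments. Unset Strict Implicit. Unset Printing Implicit Defensive.
Import Order.TTheory GRing.Theory Num.Theory.
Local Open Scope ring_scope.

(* The functional equation f_{mn}(q) = f_m(q) f_n(q^m) for all m, n in N = {1,2,...}.
   Sequences are indexed by nat; the value at index 0 is irrelevant. *)
Definition is_solution (K : fieldType) (f : nat -> {poly K}) : Prop :=
  forall m n : nat, (0 < m)%N -> (0 < n)%N -> f (m * n)%N = f m * (f n \Po 'X^m).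

Definition in_supp (K : fieldType) (f : nat -> {poly K}) (n : nat) : bool :=
  (0 < n)%N && (f n != 0).

Definition vq (K : fieldType) (p : {poly K}) : nat := find (fun c => c != 0) p.

Definition decomposition (K : fieldType) (f : nat -> {poly K})
    (a : nat -> K) (g : nat -> {poly K}) : Prop :=
  forall n : nat, (0 < n)%N ->
    if in_supp f n then
      [/\ f n = a n *: ('X^(vq (f n)) * g n), a n != 0 & (g n).[0] = 1]
    else a n = 0 /\ g n = 0.

(* Main.v *)
Require Import Defs.
From HB Require Import structures.
From mathcomp Require Import all_boot all_order all_algebra.
From mathcomp Require Import zify.
From Stdlib Require Import Classical.
Import Order.TTheory GRing.Theory Num.Theory.
Local Open Scope ring_scope.
Set Implicit Arguments. Unset Strict Implicit.

Lemma find_eqk (T : Type) (P : pred T) x0 (s : seq T) k :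
  (k < size s)%N -> P (nth x0 s k) -> (forall i, (i < k)%N -> ~~ P (nth x0 s i)) ->
  find P s = k.
Proof.
elim: s k => [|x s IH] [|k] //= Hk Pk Hi; first by rewrite Pk.
rewrite (negbTE (Hi 0%N _)) //; congr S; apply: IH => // i Hi'.
exact: (Hi i.+1).
Qed.

Lemma vqXnM (K : fieldType) k (h : {poly K}) : h`_0 != 0 -> vq ('X^k * h) = k.
Proof.
move=> h0; rewrite /vq.
have Hc : ('X^k * h)`_k = h`_0 by rewrite coefXnM ltnn subnn.
apply: (@find_eqk _ _ 0).
- rewrite ltnNge; apply/negP => H; move: (nth_default 0 H).
  by move=> E; move: h0; rewrite -Hc [_`_k]E eqxx.
- by rewrite [nth _ _ _]Hc.
- by move=> i Hi; rewrite [nth _ _ _]coefXnM Hi eqxx.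
Qed.

Lemma vq_decomp (K : fieldType) (p : {poly K}) : p != 0 ->
  p = 'X^(vq p) * drop_poly (vq p) p /\ (drop_poly (vq p) p)`_0 != 0.
Proof.
move=> p0.
have hs : has (fun c => c != 0) p.
  apply/hasP; exists (lead_coef p); last by rewrite lead_coef_eq0.
  rewrite lead_coefE; apply: mem_nth; rewrite ltn_predL size_poly_gt0 //.
have Hv := nth_find 0 hs.
have Hb := before_find 0 (a := fun c => c != 0) (s := p).
split; last by rewrite coef_drop_poly add0n.
have Ht : take_poly (vq p) p = 0.
  apply/polyP => i; rewrite coef_take_poly coef0.
  by case: ifP => // Hi; have := Hb i Hi; rewrite /= => /negbFE /eqP.
rewrite -[p in LHS](poly_take_drop (vq p)) Ht add0r mulrC //.
Qed.

Lemma compXnM (K : fieldType) k m (h : {poly K}) :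
  ('X^k * h) \Po 'X^m = 'X^(k * m) * (h \Po 'X^m).
Proof. by rewrite comp_polyM comp_Xn_poly mulnC exprM. Qed.

Lemma comp0 (K : fieldType) m (h : {poly K}) : (0 < m)%N -> (h \Po 'X^m)`_0 = h`_0.
Proof. by move=> m0; rewrite coef_comp_poly_Xn // dvdn0 div0n. Qed.

Lemma lin_rat (S : nat -> bool) (d : nat -> nat) :
  (forall n, S n -> (0 < n)%N) -> S 1%N ->
  (forall m n, S m -> S n -> S (m * n)%N /\ d (m * n)%N = (d m + d n * m)%N) ->
  exists t : rat, 0 <= t /\ forall n, S n -> (d n)%:R = t * (n.-1)%:R.
Proof.
move=> Spos S1 Hm.
have d1 : d 1%N = 0%N by have [_] := Hm _ _ S1 S1; rewrite muln1; lia.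
case: (classic (exists n0, S n0 /\ (1 < n0)%N)) => [[n0 [Sn0 n01]]|Hno].
  exists ((d n0)%:R / (n0.-1)%:R); split.
    by rewrite divr_ge0 // ler0n.
  move=> n Sn.
  have [_ E1] := Hm _ _ Sn Sn0.
  have [_ E2] := Hm _ _ Sn0 Sn.
  rewrite mulnC E1 in E2.
  have n0p := Spos _ Sn.
  have E : (d n0 * n.-1 = d n * n0.-1)%N.
    have h1 := prednK (ltnW n01); have h2 := prednK n0p; nia.
  have nz : (n0.-1)%:R != 0 :> rat by rewrite pnatr_eq0; case: n0 n01 {E E1 E2 Sn0} => [|[|]].
  by rewrite mulrAC -natrM E natrM mulfK.
exists 0; split => // n Sn; rewrite mul0r.
have : n = 1%N.
  have := Spos _ Sn; case: n Sn => [|[|k]] //= Sn _; exfalso; apply: Hno; by exists k.+2.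
by move=> ->; rewrite d1.
Qed.

Unset Implicit Arguments. Set Strict Implicit.

Theorem mainTheorem7 (K : fieldType) (f : nat -> {poly K}) :
  is_solution f ->
  (exists n : nat, (0 < n)%N /\ f n != 0) ->
  [/\ (* (i) *) f 1%N = 1,
      (* (ii) *) (forall m n : nat, (0 < m)%N -> (0 < n)%N ->
                   f m * (f n \Po 'X^m) = f n * (f m \Po 'X^n)),
      (* (iii) *)
      (exists (a : nat -> K) (g : nat -> {poly K}), decomposition f a g) /\
      (forall (a : nat -> K) (g : nat -> {poly K}), decomposition f a g ->
         [/\ (forall m n : nat, in_supp f m -> in_supp f n -> a (m * n)%N = a m * a n),
             (exists t : rat, 0 <= t /\
                forall n : nat, in_supp f n -> ((vq (f n))%:R : rat) = t * (n.-1)%:R),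
             is_solution g
           & (forall n : nat, in_supp g n = in_supp f n)]) &
      (* (iv) *)
      exists s : rat, 0 <= s /\
        forall n : nat, in_supp f n -> (((size (f n)).-1)%:R : rat) = s * (n.-1)%:R].
Proof.
move=> Hs [n1 [n1p fn1]].
have f1 : f 1%N = 1.
  have E := Hs 1%N 1%N isT isT; rewrite expr1 comp_polyXr muln1 in E.
  have nz : f 1%N != 0.
    apply/eqP => H; move: fn1; by rewrite -[n1]mul1n (Hs 1%N _ isT n1p) H mul0r eqxx.
  by apply: (mulfI nz); rewrite mulr1 -E.
have Xm : forall m, (0 < m)%N -> (1 < size ('X^m : {poly K}))%N.
  by move=> m m0; rewrite size_polyXn ltnS.
have suppM : forall m n, in_supp f m -> in_supp f n -> in_supp f (m * n).
  move=> m n /andP[m0 fm] /andP[n0 fn].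
  by rewrite /in_supp muln_gt0 m0 n0 /= (Hs _ _ m0 n0) mulf_neq0 // comp_poly_eq0 // Xm.
have suppN : forall m n, (0 < m)%N -> (0 < n)%N -> ~~ (in_supp f m && in_supp f n) ->
    f (m * n)%N = 0.
  move=> m n m0 n0; rewrite /in_supp m0 n0 /= (Hs _ _ m0 n0) negb_and !negbK.
  by move=> /orP[/eqP->|/eqP->]; rewrite ?mul0r ?comp_poly0 ?mulr0.
have S1 : in_supp f 1 by rewrite /in_supp f1 oner_neq0.
have Spos : forall n, in_supp f n -> (0 < n)%N by move=> n /andP[].
split.
- done.
- by move=> m n m0 n0; rewrite -!Hs // mulnC.
- split.
  + exists (fun n => if in_supp f n then (f n)`_(vq (f n)) else 0),
      (fun n => if in_supp f n then ((f n)`_(vq (f n)))^-1 *: drop_poly (vq (f n)) (f n) else 0).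
    move=> n n0; case Sn: (in_supp f n); last by split.
    have /andP[_ fn] := Sn.
    have [E c0] := vq_decomp fn; rewrite coef_drop_poly add0n in c0.
    split => //.
    * by rewrite -scalerAr scalerA mulfV // scale1r -E.
    * by rewrite hornerZ horner_coef0 coef_drop_poly add0n mulVf.
  + move=> a g D.
    have Dn : forall n, in_supp f n ->
        [/\ f n = 'X^(vq (f n)) * (a n *: g n), (a n *: g n)`_0 = a n & a n != 0].
      move=> n Sn; have := D n (Spos _ Sn); rewrite Sn => -[E an g0].
      by rewrite coefZ -horner_coef0 g0 mulr1 -scalerAr.
    have nzX : forall k, ('X^k : {poly K}) != 0.
      by move=> k; rewrite -size_poly_eq0 size_polyXn.
    have key : forall m n, in_supp f m -> in_supp f n ->
        [/\ vq (f (m * n)%N) = (vq (f m) + vq (f n) * m)%N, a (m * n)%N = a m * a n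
          & g (m * n)%N = g m * (g n \Po 'X^m)].
      move=> m n Sm Sn.
      have [Em cm am] := Dn _ Sm; have [En cn an] := Dn _ Sn.
      have [Emn cmn amn] := Dn _ (suppM _ _ Sm Sn).
      have E2 : f (m * n)%N = 'X^(vq (f m) + vq (f n) * m) *
                   ((a m *: g m) * ((a n *: g n) \Po 'X^m)).
        by rewrite (Hs _ _ (Spos _ Sm) (Spos _ Sn)) {1}Em {1}En compXnM exprD mulrACA.
      have c2 : ((a m *: g m) * ((a n *: g n) \Po 'X^m))`_0 = a m * a n.
        by rewrite coef0M comp0 ?cm ?cn // Spos.
      have nz2 : ((a m *: g m) * ((a n *: g n) \Po 'X^m))`_0 != 0.
        by rewrite c2 mulf_neq0.
      have V : vq (f (m * n)%N) = (vq (f m) + vq (f n) * m)%N by rewrite E2 vqXnM.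
      have G : a (m * n)%N *: g (m * n)%N = ((a m *: g m) * ((a n *: g n) \Po 'X^m)).
        by move: Emn; rewrite {1}E2 V => /(mulfI (nzX _)).
      have A : a (m * n)%N = a m * a n by rewrite -cmn G c2.
      split => //.
      apply: (scalerI (mulf_neq0 am an)).
      by rewrite -A G A comp_polyZ -scalerAr -scalerAl scalerA mulrC.
    split.
    * by move=> m n Sm Sn; case: (key _ _ Sm Sn).
    * apply: (lin_rat Spos S1) => m n Sm Sn; split; first exact: suppM.
      by case: (key _ _ Sm Sn).
    * move=> m n m0 n0; case Hmn: (in_supp f m && in_supp f n).
        by move/andP: Hmn => [Sm Sn]; case: (key _ _ Sm Sn).
      have Hmn' : ~~ in_supp f (m * n).
        by rewrite /in_supp (suppN _ _ m0 n0) ?Hmn // eqxx andbF.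
      have := D _ (ltac:(by rewrite muln_gt0 m0 n0) : (0 < m * n)%N).
      rewrite (negbTE Hmn') => -[_ ->].
      move/negbT: Hmn; rewrite negb_and => /orP[Hm|Hn].
        by have := D _ m0; rewrite (negbTE Hm) => -[_ ->]; rewrite mul0r.
      by have := D _ n0; rewrite (negbTE Hn) => -[_ ->]; rewrite comp_poly0 mulr0.
    * move=> n; case: (posnP n) => [->|n0]; first by rewrite /in_supp.
      have := D n n0; case: ifP => Sn.
        move=> [_ _ g0]; rewrite /in_supp n0 /=; apply/eqP => H.
        by move: g0; rewrite H horner0 => /esym/eqP; rewrite oner_eq0.
      by move=> [_ H]; rewrite /in_supp H eqxx andbF.
- apply: (lin_rat Spos S1) => m n Sm Sn; split; first exact: suppM.
  have [m0 fm] := andP Sm; have [n0 fn] := andP Sn.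
  have nzc : f n \Po 'X^m != 0 by rewrite comp_poly_eq0 // Xm.
  rewrite (Hs _ _ m0 n0) size_mul //.
  have := size_comp_poly (f n) ('X^m); rewrite size_polyXn /=.
  have p1 : (0 < size (f m))%N by rewrite size_poly_gt0.
  have p2 : (0 < size (f n \Po 'X^m))%N by rewrite size_poly_gt0.
  move: p1 p2; case: (size (f m)) => // x _; case: (size (f n \Po 'X^m)) => // y _ /= H.
  by rewrite addnS /= H.
Qed.
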